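(* Let $X$ be a nonempty set, $f:X\to X$ a function, and $\tau_1$ the fuzzy topology on $X$ defined below. Then $f:(X,\tau_1)\to(X,\tau_1)$ is onto if and only if $f$ is an open map.
   Context: A fuzzy subset of $X$ is a function $\mu:X\to[0,1]$; union is the pointwise supremum, intersection the pointwise minimum; $\emptyset$ is the constant $0$ and $X$ the constant $1$. A fuzzy topology is a family of fuzzy subsets containing $\emptyset$ and $X$, closed under arbitrary unions and finite intersections; the topology generated by a base $\mathbb{B}$ consists of $\emptyset$ and all unions of subfamilies of $\mathbb{B}$. $\mathbb{N}=\{1,2,\dots\}$, $f^{n+1}=f^n\circ f$. Definition of $\tau_1$: for $n\in\mathbb{N}$ let $\mathcal{A}_n$ be the fuzzy subset with $\mu_{\mathcal{A}_n}(x)=1$ if there exists $m\in\mathbb{N}$ with $f^m(x)=x$, and $\mu_{\mathcal{A}_n}(x)=1/n$ otherwise; $\tau_1$ is generated by the base $\{\mathcal{A}_n:n\in\mathbb{N}\}$. The image of a fuzzy set $A$ is $\mu_{f(A)}(y)=\sup\{\mu_A(x): f(x)=y\}$, and $\mu_{f(A)}(y)=0$ if $y\notin f(X)$. $f$ is open if $f(U)$ is open for every open fuzzy set $U$. *)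

(* Defs.v *)
From Stdlib Require Import Reals.
Open Scope R_scope.

Fixpoint iterf {X : Type} (f : X -> X) (m : nat) (x : X) : X :=
  match m with O => x | S k => f (iterf f k x) end.

Definition periodic {X : Type} (f : X -> X) (x : X) : Prop :=
  exists m : nat, (1 <= m)%nat /\ iterf f m x = x.

Definition is_fuzzy {X : Type} (mu : X -> R) : Prop :=
  forall x, 0 <= mu x <= 1.

(* supremum of a set of membership degrees, with sup of the empty set = 0
   (the value of the empty fuzzy set) *)
Definition fsup (E : R -> Prop) (s : R) : Prop :=
  ((exists r, E r) /\ is_lub E s) \/ ((~ exists r, E r) /\ s = 0).

(* membership degree of the basic fuzzy set A_n (n >= 1) at x *)
Definition A_val {X : Type} (f : X -> X) (n : nat) (x : X) (r : R) : Prop :=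
  (periodic f x /\ r = 1) \/ (~ periodic f x /\ r = / INR n).

(* open sets of tau_1: the empty fuzzy set, and all unions of subfamilies
   of the base {A_n : n in N} *)
Definition tau1_open {X : Type} (f : X -> X) (mu : X -> R) : Prop :=
  is_fuzzy mu /\
  ((forall x, mu x = 0) \/
   exists S : nat -> Prop, (forall n, S n -> (1 <= n)%nat) /\
     forall x, fsup (fun r => exists n, S n /\ A_val f n x r) (mu x)).

Definition fimage {X : Type} (f : X -> X) (mu nu : X -> R) : Prop :=
  forall y, fsup (fun r => exists x, f x = y /\ r = mu x) (nu y).

Definition tau1_open_map {X : Type} (f : X -> X) : Prop :=
  forall mu nu, tau1_open f mu -> fimage f mu nu -> tau1_open f nu.

(* Main.v *)
Require Import Defs.
From Stdlib Require Import Reals.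
From Stdlib Require Import Lra Lia Classical ClassicalEpsilon FunctionalExtensionality.
Open Scope R_scope.

Lemma fsup_unique (E : R -> Prop) s1 s2 : fsup E s1 -> fsup E s2 -> s1 = s2.
Proof.
  intros [[H1 L1]|[H1 e1]] [[H2 L2]|[H2 e2]]; try tauto; try lra.
  destruct L1 as [U1 M1], L2 as [U2 M2].
  apply Rle_antisym; [apply M1; exact U2 | apply M2; exact U1].
Qed.

Lemma fsup_ext (E E' : R -> Prop) s : (forall r, E r <-> E' r) -> fsup E s -> fsup E' s.
Proof.
  intros He [[[r Hr] [U M]]|[Hn e]].
  - left; split. exists r; apply He; auto.
    split. intros x Hx; apply U, He, Hx.
    intros b Hb; apply M; intros x Hx; apply Hb, He, Hx.
  - right; split; auto. intros [r Hr]; apply Hn; exists r; apply He; auto.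
Qed.

Lemma fsup_single s : fsup (fun r => r = 1) s -> s = 1.
Proof.
  intros H; apply (fsup_unique _ _ _ H). left; split. exists 1; auto.
  split. intros x ->; lra. intros b Hb; apply Hb; auto.
Qed.

Lemma iterf_S {X} (f : X -> X) k x : iterf f (S k) x = iterf f k (f x).
Proof. induction k; simpl; auto. simpl in IHk; rewrite IHk; auto. Qed.

Lemma per_f {X} (f : X -> X) x : periodic f x -> periodic f (f x).
Proof.
  intros [m [Hm Hx]]; exists m; split; auto.
  rewrite <- iterf_S; simpl; rewrite Hx; auto.
Qed.

Lemma per_iter {X} (f : X -> X) k x : periodic f x -> periodic f (iterf f k x).
Proof. induction k; simpl; auto. intros H; apply per_f; auto. Qed.

Lemma open_char {X} (f : X -> X) mu : tau1_open f mu ->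
  (forall x1 x2, (periodic f x1 <-> periodic f x2) -> mu x1 = mu x2) /\
  (forall x z, periodic f x -> mu z <= mu x).
Proof.
  intros [Hf [H0 | [S [HS Hs]]]].
  - split; intros; rewrite !H0; lra.
  - split.
    + intros x1 x2 Hp. apply (fsup_unique _ _ _ (Hs x1)).
      eapply fsup_ext; [|apply Hs]. intros r; unfold A_val; split;
      intros [n [Sn Hn]]; exists n; split; auto; tauto.
    + intros x z Px. destruct (classic (exists n, S n)) as [[n Sn]|Hn].
      * assert (mu x = 1).
        { apply fsup_single. eapply fsup_ext; [|apply (Hs x)].
          intros r; unfold A_val; split.
          - intros [k [_ [[_ ?]|[? _]]]]; tauto.
          - intros ->; exists n; tauto. }
        rewrite H; apply Hf.
      * assert (mu z = 0).
        { destruct (Hs z) as [[[r [n [Sn _]]] _]|[_ e]]; auto.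
          exfalso; apply Hn; eauto. }
        rewrite H; apply Hf.
Qed.

Theorem theorem2p7 (X : Type) (HX : inhabited X) (f : X -> X) :
  (forall y : X, exists x : X, f x = y) <-> tau1_open_map f.
Proof.
  split.
  - intros Hon mu nu Hmu Him.
    destruct (open_char f mu Hmu) as [Hdep Hmon].
    assert (Heq : nu = mu).
    { apply functional_extensionality; intros y.
      apply (fsup_unique _ _ _ (Him y)).
      assert (Hx : exists x, f x = y /\ mu x = mu y).
      { destruct (classic (periodic f y)) as [Py|Py].
        - destruct Py as [m [Hm Hy]]. destruct m as [|k]; [lia|].
          exists (iterf f k y). split. exact Hy.
          apply Hdep. split; intros _; [exact (ex_intro _ (S k) (conj Hm Hy))|].
          apply per_iter; exists (S k); auto.
        - destruct (Hon y) as [x Hx]; exists x; split; auto.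
          apply Hdep; split; intros P; [|tauto]. subst y; exact (per_f f _ P). }
      destruct Hx as [x0 [Hx0 Hm0]].
      left; split. exists (mu x0); eauto.
      split.
      - intros r [x [Hxy ->]].
        destruct (classic (periodic f y)) as [Py|Py]. apply Hmon; auto.
        right; apply Hdep; split; intros P; [|tauto]. rewrite <- Hxy; exact (per_f f _ P).
      - intros b Hb; rewrite <- Hm0; apply Hb; eauto. }
    subst nu; auto.
  - intros Hop y. apply NNPP; intros Hny.
    destruct HX as [x0].
    set (nu := fun z => if excluded_middle_informative (exists x, f x = z) then 1 else 0).
    assert (Hmu : tau1_open f (fun _ => 1)).
    { split. intros x; lra. right. exists (fun n => n = 1%nat). split. intros n ->; lia.
      intros x. apply (fsup_ext (fun r => r = 1)).
      - intros r; unfold A_val; simpl; split.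
        + intros ->; exists 1%nat; split; auto. destruct (classic (periodic f x)); [left|right]; split; auto; simpl; rewrite ?Rinv_1; lra.
        + intros [n [-> [[_ ?]|[_ ?]]]]; auto; rewrite H; simpl; rewrite Rinv_1; lra.
      - left; split. exists 1; auto. split. intros r ->; lra. intros b Hb; apply Hb; auto. }
    assert (Him : fimage f (fun _ => 1) nu).
    { intros z; unfold nu. destruct (excluded_middle_informative (exists x, f x = z)) as [[x Hx]|Hn].
      - left; split. exists 1; eauto. split. intros r [_ [_ ->]]; lra.
        intros b Hb; apply Hb; eauto.
      - right; split; auto. intros [r [x [Hx _]]]; eauto. }
    destruct (Hop _ _ Hmu Him) as [_ [H0 | [S [HS Hs]]]].
    + specialize (H0 (f x0)); unfold nu in H0.
      destruct (excluded_middle_informative _) as [_|n]; [lra|apply n; eauto].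
    + assert (Hy : nu y = 0).
      { unfold nu; destruct (excluded_middle_informative _); [tauto|auto]. }
      assert (H1 : nu (f x0) = 1).
      { unfold nu; destruct (excluded_middle_informative _) as [_|n]; [auto|exfalso; apply n; eauto]. }
      destruct (Hs (f x0)) as [[[r [n [Sn _]]] _]|[_ e]]; [|lra].
      destruct (Hs y) as [[_ [U _]]|[Hne _]].
      * assert (Hr : exists r, A_val f n y r /\ 0 < r).
        { destruct (classic (periodic f y)).
          - exists 1; split; [left; auto | lra].
          - exists (/ INR n); split; [right; auto|].
            apply Rinv_0_lt_compat, lt_0_INR; specialize (HS n Sn); lia. }
        destruct Hr as [r' [Ar Pr]]. assert (r' <= nu y) by (apply U; eauto). lra.
      * apply Hne. destruct (classic (periodic f y)).
        exists 1, n; split; auto; left; auto.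
        exists (/ INR n), n; split; auto; right; auto.
Qed.
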